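(* There is a $T$-family on $\mathbb N$. More precisely, for every $0<\varepsilon<1$ there are a partition $\mathbb N=\bigcup_n I_n$ into nonempty finite pieces $I_n$ and a pre-compact family $\mathcal F$ on $\mathbb N$ such that: (a) $\mathcal F$ is not $4$-large in any infinite $M\subseteq\mathbb N$; (b) $\mathcal G_{1-\varepsilon}(\mathcal F)=\mathcal G_+(\mathcal F)=\mathfrak S$, where $\mathfrak S=\{s\subseteq\mathbb N:\#s=\min s\}$ is the Schreier barrier; (c) for every $s\in\mathcal F$ one has $s\cap I_n=I_n$, where $n$ is the least $m$ with $s\cap I_m\neq\emptyset$.
   Context: A family on $J$ is a collection of finite subsets of $J$; it is pre-compact if every set in its closure in $2^J$ (product topology) is finite. A family $\mathcal H$ is $n$-large in $J$ if for every infinite $K\subseteq J$ there is $s\in\mathcal H$ with $\#(s\cap K)\ge n$, and large in $J$ if it is $n$-large for every $n$. For finite $s\subseteq\mathbb N$ and $0<\lambda<1$: $s[\lambda]=\{n:\#(s\cap I_n)\ge\lambda\#I_n\}$, $s[+]=\{n:s\cap I_n\ne\emptyset\}$, $\mathcal G_\lambda(\mathcal F)=\{s[\lambda]:s\in\mathcal F\}$, $\mathcal G_+(\mathcal F)=\{s[+]:s\in\mathcal F\}$. A pre-compact family $\mathcal F$ on a set $I$ partitioned into finite pieces $(I_n)_n$ is a $T$-family if it is not large in any infinite $J\subseteq I$ and there is $0<\lambda\le1$ such that $\mathcal G_\lambda(\mathcal F)$ is large in $\mathbb N$. *)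

(* Defs.v *)
From HB Require Import structures.
From mathcomp Require Import all_boot all_order all_algebra.
From mathcomp Require Import finmap.
From mathcomp Require Import reals.
Set Implicit Arguments. Unset Strict Implicit. Unset Printing Implicit Defensive.
Import Order.TTheory GRing.Theory Num.Theory.

Local Open Scope fset_scope.

Definition nfamily := {fset nat} -> Prop.

Definition subset_nat := nat -> bool.

Definition infinite_set (K : subset_nat) : Prop :=
  forall N : nat, exists k, (N <= k)%N /\ K k.

Definition subset_of (K J : subset_nat) : Prop := forall k, K k -> J k.

(* x lies in the closure of F in 2^N (product topology): every basic
   neighbourhood {y | y agrees with x below n} meets F. *)
Definition in_closure (F : nfamily) (x : subset_nat) : Prop :=
  forall n : nat, exists s, F s /\ forall k, (k < n)%N -> (k \in s) = x k.

Definition precompact (F : nfamily) : Prop :=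
  forall x, in_closure F x -> exists N : nat, forall k, x k -> (k < N)%N.

Definition card_inter (s : {fset nat}) (K : subset_nat) : nat :=
  #|` [fset k in s | K k] |.

Definition n_large (F : nfamily) (J : subset_nat) (n : nat) : Prop :=
  forall K : subset_nat, subset_of K J -> infinite_set K ->
    exists s, F s /\ (n <= card_inter s K)%N.

Definition partition_nat (I : nat -> {fset nat}) : Prop :=
  (forall n, I n != fset0) /\
  (forall n m, n <> m -> I n `&` I m = fset0) /\
  (forall k, exists n, k \in I n).

Definition is_s_lambda (R : realType) (I : nat -> {fset nat}) (lam : R)
    (s t : {fset nat}) : Prop :=
  forall n, n \in t <-> (lam * (#|` I n|)%:R <= (#|` s `&` I n|)%:R)%R.

Definition is_s_plus (I : nat -> {fset nat}) (s t : {fset nat}) : Prop :=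
  forall n, n \in t <-> s `&` I n != fset0.

Definition G_lambda (R : realType) (I : nat -> {fset nat}) (lam : R)
    (F : nfamily) : nfamily :=
  fun t => exists s, F s /\ is_s_lambda I lam s t.

Definition G_plus (I : nat -> {fset nat}) (F : nfamily) : nfamily :=
  fun t => exists s, F s /\ is_s_plus I s t.

Definition schreier : nfamily :=
  fun s => exists m, m \in s /\ (forall k, k \in s -> (m <= k)%N) /\ #|` s| = m.

Definition same_family (F G : nfamily) : Prop := forall s, F s <-> G s.

(* Main.v *)
Require Import Defs.
From HB Require Import structures.
From mathcomp Require Import all_boot all_order all_algebra.
From mathcomp Require Import finmap.
From mathcomp Require Import reals.
From mathcomp Require Import zify ring lra.
From Stdlib Require Import Classical ClassicalEpsilon.
Set Implicit Arguments. Unset Strict Implicit. Unset Printing Implicit Defensive.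


Section Constr.
Variable K : nat.
Hypothesis K_gt2 : (2 < K)%N.

Definition Q d := K ^ (d + d).
Notation T d := {ffun 'I_d -> 'I_(Q d)}.
Definition NN d := #|T d|.
Fixpoint Sb d := if d is d'.+1 then Sb d' + NN d' else 0.
Definition enc d (f : T d) : nat := Sb d + enum_rank f.
Definition fat d (f : T d) (e : nat) : nat :=
  oapp (fun o : 'I_d => nat_of_ord (f o)) 0 (insub e).
Definition rho a := K ^ (a + a).+1.
Definition holeF (t : {fset nat}) d (f : T d) : bool :=
  has (fun p => [&& p.1 < p.2, p.2 < d & fat f p.1 %% rho #|`t| == fat f p.2 %% rho #|`t|])
    [seq (x, y) | x <- enum_fset t, y <- enum_fset t].
Definition partl t d := [seq enc f | f <- enum [set f : T d | ~~ holeF t f]].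
Definition Il d := [seq enc f | f <- enum (T d)].
Definition I d := seq_fset tt (Il d).
Definition build (t : {fset nat}) := seq_fset tt (flatten [seq partl t d | d <- enum_fset t]).

Lemma Q_gt0 d : 0 < Q d. Proof. by rewrite expn_gt0; case: K K_gt2. Qed.
Lemma NN_gt0 d : 0 < NN d.
Proof. apply/card_gt0P. exists [ffun _ => Ordinal (Q_gt0 d)]. by []. Qed.
Lemma S_ge d : d <= Sb d.
Proof. elim: d => //= d IH. have := NN_gt0 d. lia. Qed.
Lemma S_mono d d' : d <= d' -> Sb d <= Sb d'.
Proof. elim: d' => [|d' IH]; first by rewrite leqn0 => /eqP->.
rewrite leq_eqVlt => /orP[/eqP->//|]; rewrite ltnS => /IH /=. lia. Qed.
Lemma enc_bounds d (f : T d) : Sb d <= enc f < Sb d.+1.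
Proof. rewrite /enc /= /NN leq_addr /= ltn_add2l. exact: ltn_ord. Qed.
Lemma enc_inj d : injective (@enc d).
Proof. move=> f g; rewrite /enc => /addnI /val_inj. exact: enum_rank_inj. Qed.
Lemma enc_piece d d' (f : T d) (g : T d') : enc f = enc g -> d = d'.
Proof.
move=> E; have := enc_bounds f; have := enc_bounds g; rewrite E.
case: (ltngtP d d') => // H.
- have := S_mono H; lia.
- have := S_mono H; lia.
Qed.
Lemma enc_lt d d' (f : T d) (g : T d') : enc f < enc g -> d <= d'.
Proof.
move=> E; have := enc_bounds f; have := enc_bounds g.
case: (leqP d d') => // H. have := S_mono H; lia.
Qed.
Lemma in_Il d k : (k \in Il d) = (Sb d <= k < Sb d.+1).
Proof.
apply/mapP/idP.
- by case=> f _ ->; apply: enc_bounds.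
- move=> /andP[H1 H2]. have H3 : k - Sb d < #|T d| by rewrite /= /NN in H2; lia.
  exists (enum_val (Ordinal H3)); first by rewrite mem_enum.
  by rewrite /enc enum_valK /=; lia.
Qed.
Lemma in_I d k : (k \in I d) = (Sb d <= k < Sb d.+1).
Proof. by rewrite seq_fsetE in_Il. Qed.
Lemma cover k : exists d, k \in I d.
Proof.
have ex : exists d, k < Sb d.+1 by exists k; have := S_ge k.+1; lia.
case: (ex_minnP ex) => d H1 Hmin; exists d; rewrite in_I H1 andbT.
case: d H1 Hmin => // d H1 Hmin. have := Hmin d. case: (ltnP k (Sb d.+1)) => // Hk /(_ isT). lia.
Qed.
Lemma I_disj d d' k : k \in I d -> k \in I d' -> d = d'.
Proof.
rewrite !in_I => /andP[a b] /andP[c e].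
case: (ltngtP d d') => // H.
- have := S_mono H; lia.
- have := S_mono H; lia.
Qed.

End Constr.


Section Count.
Variables (A : finType) (q m : nat) (i i' : A).
Hypotheses (ii : i != i') (m_gt0 : 0 < m) (mq : m %| q).
Notation TT := {ffun A -> 'I_q}.
Definition sig0 (f : TT) : TT := [ffun j => if j == i' then ordS (f j) else f j].
Definition Dc (f : TT) := (f i' + (m - f i %% m)) %% m.

Lemma sig0_inj : injective sig0.
Proof.
move=> f g E; apply/ffunP => j; have := congr1 (fun h : TT => h j) E; rewrite /sig0 !ffunE.
by case: (j == i') => //; apply: ordS_inj.
Qed.

Lemma Dc_sig f : Dc (sig0 f) = (Dc f).+1 %% m.
Proof.
rewrite /Dc /sig0 !ffunE eqxx (negbTE ii) /=.
set X := m - _.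
rewrite -modnDml (modn_dvdm _ mq) modnDml.
by rewrite -[((_ %% m).+1)]addn1 modnDml; congr (_ %% m); lia.
Qed.

Lemma Dc_iter r f : Dc (iter r sig0 f) = (Dc f + r) %% m.
Proof.
elim: r => [|r IH] /=; first by rewrite addn0 /Dc modn_mod.
by rewrite Dc_sig IH -[((_ %% m).+1)]addn1 modnDml; congr (_ %% m); lia.
Qed.

Lemma iter_sig_inj r : injective (iter r sig0).
Proof. elim: r => //= r IH f g /sig0_inj. exact: IH. Qed.

Lemma Dc0 f : (Dc f == 0) = (f i %% m == f i' %% m).
Proof.
rewrite /Dc. have u := ltn_pmod (f i) m_gt0.
rewrite -modnDml. set w := f i' %% m. have wl : w < m by exact: ltn_pmod.
set u' := f i %% m in u *.
case: (leqP u' w) => H.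
- have -> : w + (m - u') = (w - u') + m by lia.
  rewrite modnDr modn_small; last by lia.
  apply/eqP/eqP; lia.
- rewrite modn_small; last by lia. apply/eqP/eqP; lia.
Qed.

Lemma count_pair : m * #|[set f : TT | f i %% m == f i' %% m]| <= #|TT|.
Proof.
set C := [set f : TT | _].
have -> : m * #|C| = #|setX C [set: 'I_m]| by rewrite cardsX cardsT card_ord mulnC.
apply: (@leq_card_in _ _ (fun p : TT * 'I_m => iter p.2 sig0 p.1)).
move=> [f r] [g r'] /=; rewrite !inE /= !andbT => Cf Cg E.
have E2 := congr1 Dc E. rewrite !Dc_iter in E2.
move: Cf Cg E2; rewrite -!Dc0 => /eqP -> /eqP -> E2.
rewrite !add0n !modn_small // in E2.
have er : r = r' by apply: val_inj.
subst r'. by rewrite (iter_sig_inj E).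
Qed.
End Count.


Lemma card_has (T : finType) (X : Type) (P : X -> T -> bool) (s : seq X) :
  #|[set f | has (fun p => P p f) s]| <= \sum_(p <- s) #|[set f | P p f]|.
Proof.
elim: s => [|p s IH]; first by rewrite big_nil; apply/eq_leq; apply/eqP; rewrite cards_eq0; apply/eqP/setP=> f; rewrite !inE.
rewrite big_cons.
have -> : [set f | has (fun p0 => P p0 f) (p :: s)] = [set f | P p f] :|: [set f | has (fun p => P p f) s].
  by apply/setP=> f; rewrite !inE.
apply: leq_trans (leq_card_setU _ _) _. by rewrite leq_add2l.
Qed.

Lemma card_set_false (T : finType) (P : pred T) : (forall f, P f = false) -> #|[set f | P f]| = 0.
Proof. by move=> h; apply/eqP; rewrite cards_eq0; apply/eqP/setP => f; rewrite !inE h. Qed.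

Section Hole.
Variable K : nat.
Hypothesis K_gt2 : (2 < K)%N.
Notation T d := {ffun 'I_d -> 'I_(Q K d)}.

Lemma fat_ord d (f : T d) (o : 'I_d) : fat f o = f o.
Proof. rewrite /fat insubT //= => h. do 2 f_equal; exact: val_inj. Qed.

Lemma hole_bound (t : {fset nat}) d :
  (forall e, e \in t -> #|`t| <= e) ->
  rho K #|`t| * #|[set f : T d | holeF t f]| <= #|`t| * #|`t| * NN K d.
Proof.
move=> tmin; set a := #|`t|; set m := rho K a.
have m_gt0 : 0 < m by rewrite expn_gt0; case: K K_gt2.
rewrite /holeF.
apply: leq_trans (leq_mul (leqnn m) (card_has _ _)) _.
rewrite big_distrr /=.
have -> : a * a * NN K d = \sum_(p <- [seq (x, y) | x <- enum_fset t, y <- enum_fset t]) NN K d.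
  by rewrite big_const_seq count_predT size_allpairs iter_addn_0 mulnC.
rewrite big_seq [X in _ <= X]big_seq; apply: leq_sum => -[x y] /allpairsP [[x' y'] [/= xt yt [-> ->]]] /=.
case: (ltnP x' y') => hxy; last first.
  apply: leq_trans (_ : _ <= m * 0) _; last by rewrite muln0.
  rewrite leq_mul2l leqn0 cards_eq0; apply/orP; right; apply/eqP/setP => f.
  by rewrite !inE.
case: (ltnP y' d) => hyd; last first.
  apply: leq_trans (_ : _ <= m * 0) _; last by rewrite muln0.
  rewrite leq_mul2l leqn0 cards_eq0; apply/orP; right; apply/eqP/setP => f.
  by rewrite !inE ?andbF.
have hxd : x' < d by lia.
have ax : a <= x' by apply: tmin.
have mq : m %| Q K d by rewrite /m /rho /Q dvdn_exp2l //; lia.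
have oo : Ordinal hxd != Ordinal hyd by apply/eqP => -[]; lia.
have := count_pair oo m_gt0 mq.
rewrite (_ : [set f : T d | _ ] = [set f : T d | f (Ordinal hxd) %% m == f (Ordinal hyd) %% m]) //.
apply/setP=> f; rewrite !inE /=.
by rewrite -(fat_ord f (Ordinal hxd)) -(fat_ord f (Ordinal hyd)).
Qed.

Lemma hole_small (t : {fset nat}) d :
  (forall e, e \in t -> #|`t| <= e) ->
  K * #|[set f : T d | holeF t f]| <= NN K d.
Proof.
move=> tmin; have := hole_bound d tmin; set a := #|`t|; set H := #|_|.
have aK : a * a <= K ^ a * K ^ a.
  by apply: leq_mul; apply: ltnW; apply: ltn_expl; lia.
rewrite /rho -addn1 expnD expn1 expnD => h.
have h2 : (K ^ a * K ^ a) * (K * H) <= (K ^ a * K ^ a) * NN K d.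
  apply: leq_trans (leq_mul aK (leqnn _)).
  by apply: leq_trans h; rewrite mulnA.
by rewrite leq_pmul2l ?muln_gt0 ?expn_gt0 ?(ltn_trans _ K_gt2) in h2.
Qed.
End Hole.


Definition inf (S : nat -> Prop) := forall N, exists k, N <= k /\ S k.

Lemma pigeon m : forall (S : nat -> Prop) (h : nat -> nat), inf S ->
  (forall x, S x -> h x < m) -> exists v, inf (fun x => S x /\ h x = v).
Proof.
elim: m => [|m IH] S h iS hb.
  by case: (iS 0) => x [_ /hb].
case: (classic (inf (fun x => S x /\ h x = m))) => H; first by exists m.
have [N HN] : exists N, forall k, N <= k -> ~ (S k /\ h k = m).
  apply: NNPP => C; apply: H => N; apply: NNPP => C2; apply: C; exists N => k Nk Sk.
  by apply: C2; exists k.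
have iS' : inf (fun x => S x /\ N <= x).
  move=> N'; case: (iS (maxn N N')) => k [Hk Sk]; exists k; split; [lia|split=>//; lia].
have hb' : forall x, S x /\ N <= x -> h x < m.
  move=> x [Sx Nx]; have hx := hb x Sx; rewrite ltnS leq_eqVlt in hx.
  by case/orP: hx => // /eqP E; case: (HN x Nx).
have [v Hv] := IH (fun x => S x /\ N <= x) h iS' hb'.
exists v => N'; case: (Hv N') => k [Nk [[Sk _] hk]]; by exists k.
Qed.

Section Diag.
Variable Qp : nat -> (nat -> Prop) -> Prop.
Definition good (S : nat -> Prop) (p : nat * (nat -> Prop)) :=
  S p.1 /\ inf p.2 /\ (forall x, p.2 x -> S x /\ p.1 < x) /\ Qp p.1 p.2.
Definition stepf (S : nat -> Prop) := epsilon (inhabits (0, S)) (good S).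
Variable S0 : nat -> Prop.
Fixpoint stf i := match i with 0 => stepf S0 | i'.+1 => stepf (stf i').2 end.
Definition Sin i := match i with 0 => S0 | i'.+1 => (stf i').2 end.

Hypothesis Qmono : forall a S S', Qp a S -> (forall x, S' x -> S x) -> Qp a S'.
Hypothesis Qstep : forall S, inf S -> exists a, S a /\ exists S', inf S' /\
   (forall x, S' x -> S x /\ a < x) /\ Qp a S'.
Hypothesis iS0 : inf S0.

Lemma stf_good i : inf (Sin i) /\ good (Sin i) (stf i).
Proof.
have key : forall S, inf S -> good S (stepf S).
  move=> S iS; apply: epsilon_spec; have [a [Sa [S' [i' [h q]]]]] := Qstep iS.
  by exists (a, S').
elim: i => [|i [IH1 IH2]]; first by split => //; apply: key.
have i2 : inf (Sin i.+1) by case: IH2 => _ [].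
by split => //; apply: key.
Qed.

Lemma Sin_nest i j : i <= j -> forall x, Sin j x -> Sin i x.
Proof.
elim: j => [|j IH]; first by rewrite leqn0 => /eqP ->.
rewrite leq_eqVlt => /orP[/eqP -> //|]; rewrite ltnS => ij x Hx.
apply: (IH ij x); have [_ [_ [_ [h _]]]] := stf_good j.
exact: (h x Hx).1.
Qed.

Lemma diag : exists a : nat -> nat, (forall i, S0 (a i)) /\ (forall i, a i < a i.+1) /\
  (forall i, Qp (a i) (fun x => exists k, i < k /\ x = a k)).
Proof.
exists (fun i => (stf i).1).
have ain : forall i, Sin i (stf i).1 by move=> i; have [_ [h _]] := stf_good i.
have later : forall i k, i < k -> (stf i).2 (stf k).1.
  move=> i k ik; have := Sin_nest ik (ain k) => //.
split; first by move=> i; apply: (Sin_nest (leq0n i)); apply: ain.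
split; first by move=> i; have [_ [_ [_ [h _]]]] := stf_good i; exact: (h _ (later i i.+1 (ltnSn i))).2.
move=> i; have [_ [_ [_ [_ q]]]] := stf_good i.
apply: Qmono q _ => x [k [ik ->]]; exact: later.
Qed.
End Diag.

Lemma incr_mono (a : nat -> nat) : (forall i, a i < a i.+1) -> forall i k, i < k -> a i < a k.
Proof.
move=> h i; elim => [//|k IH] ik.
case: (ltngtP i k) => [/IH|?|->]; move: (h k); lia.
Qed.
Lemma incr_inv (a : nat -> nat) : (forall i, a i < a i.+1) -> forall i k, a i < a k -> i < k.
Proof. move=> h i k aik; case: (ltngtP i k) => // [/(incr_mono h)|E]; last subst; lia. Qed.
Lemma incr_ge (a : nat -> nat) : (forall i, a i < a i.+1) -> forall i, i <= a i.
Proof. move=> h; elim => // i IH; move: (h i); lia. Qed.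

Lemma ramsey2 m (c : nat -> nat -> nat) S : inf S -> (forall e d, c e d < m) ->
  exists R, inf R /\ (forall x, R x -> S x) /\
    exists v, forall e d, R e -> R d -> e < d -> c e d = v.
Proof.
move=> iS cb.
pose Qp := fun a (S' : nat -> Prop) => exists v, forall d, S' d -> c a d = v.
have [a [aS [ainc aQ]]] : exists a : nat -> nat, (forall i, S (a i)) /\ (forall i, a i < a i.+1) /\
  (forall i, Qp (a i) (fun x => exists k, i < k /\ x = a k)).
  apply: diag => //.
  - move=> a0 S1 S' [v hv] sub; exists v => d /sub; exact: hv.
  - move=> S1 iS1; case: (iS1 0) => a0 [_ Sa0]; exists a0; split => //.
    have iS2 : inf (fun x => S1 x /\ a0 < x).
      move=> N; case: (iS1 (maxn N a0.+1)) => k [Hk Sk]; exists k; split; [lia|split=>//; lia].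
    have [v hv] := pigeon (h := c a0) iS2 (fun x _ => cb a0 x).
    exists (fun x => (S1 x /\ a0 < x) /\ c a0 x = v); split => //.
    split; first by move=> x [[]].
    by exists v => d [].
pose h := fun i => c (a i) (a i.+1).
have iT : inf (fun _ => True) by move=> N; exists N.
have [v hv] := pigeon (h := h) iT (fun x _ => cb _ _).
exists (fun x => exists i, (True /\ h i = v) /\ x = a i); split.
  move=> N; case: (hv N) => i [Ni Hi]; exists (a i); split; last by exists i.
  have := incr_ge ainc i; lia.
split; first by move=> x [i [_ ->]].
exists v => e d [i [[_ hi] ->]] [k [_ ->]] /(incr_inv ainc) ik.
have [w hw] := aQ i.
rewrite (hw (a k)); last by exists k.
rewrite -hi /h (hw (a i.+1)) //; by exists i.+1.
Qed.

Lemma fusion (rho : nat -> nat) (c : nat -> nat -> nat -> nat) S : inf S ->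
  (forall j e d, c j e d < rho j) ->
  exists J, inf J /\ (forall x, J x -> S x) /\
    forall e1 e2 e3 d, J e1 -> J e2 -> J e3 -> J d -> e1 < e2 -> e2 < e3 -> e3 < d ->
      c e1 e2 d = c e1 e3 d.
Proof.
move=> iS cb.
pose Qp := fun j (S' : nat -> Prop) =>
  exists v, forall e d, S' e -> S' d -> e < d -> c j e d = v.
have [a [aS [ainc aQ]]] : exists a : nat -> nat, (forall i, S (a i)) /\ (forall i, a i < a i.+1) /\
  (forall i, Qp (a i) (fun x => exists k, i < k /\ x = a k)).
  apply: diag => //.
  - move=> a0 S1 S' [v hv] sub; exists v => e d /sub Se /sub Sd; exact: hv.
  - move=> S1 iS1; case: (iS1 0) => a0 [_ Sa0]; exists a0; split => //.
    have iS2 : inf (fun x => S1 x /\ a0 < x).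
      move=> N; case: (iS1 (maxn N a0.+1)) => k [Hk Sk]; exists k; split; [lia|split=>//; lia].
    have [R [iR [sub [v hv]]]] := ramsey2 (c := c a0) iS2 (cb a0).
    exists R; split => //; split; first by move=> x /sub.
    by exists v.
exists (fun x => exists i, x = a i); split.
  move=> N; exists (a N); split; last by exists N. exact: incr_ge.
split; first by move=> x [i ->].
move=> e1 e2 e3 d [i ->] [k ->] [l ->] [r ->] /(incr_inv ainc) ik /(incr_inv ainc) kl /(incr_inv ainc) lr.
have [w hw] := aQ i.
have ir : i < r by lia.
have il : i < l by lia.
rewrite (hw (a k) (a r)); [|by exists k|by exists r|exact: (incr_mono ainc (ltn_trans kl lr))].
rewrite (hw (a l) (a r)); [by []|by exists l|by exists r|exact: (incr_mono ainc lr)].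
Qed.


Section Main.
Variable K : nat.
Hypothesis K_gt2 : (2 < K)%N.
Notation T d := {ffun 'I_d -> 'I_(Q K d)}.

Definition part t d := seq_fset tt (partl K t d).

Lemma mem_partl t d k : reflect (exists f : T d, ~~ holeF t f /\ k = enc f) (k \in partl K t d).
Proof.
apply: (iffP mapP) => [[f]|[f [hf ->]]]; last by exists f; rewrite // mem_enum inE.
by rewrite mem_enum inE => hf ->; exists f.
Qed.

Lemma partl_I t d k : k \in partl K t d -> k \in I K d.
Proof. by case/mem_partl => f [_ ->]; rewrite (in_I K_gt2) enc_bounds. Qed.

Lemma mem_build t k : (k \in build K t) = has (fun d => k \in partl K t d) (enum_fset t).
Proof.
rewrite /build seq_fsetE; apply/flattenP/hasP.
- by case=> s /mapP [d dt ->] ks; exists d.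
- by case=> d dt kd; exists (partl K t d) => //; apply: map_f.
Qed.

Lemma inter_build t n :
  (build K t `&` I K n)%fset = if n \in t then part t n else fset0.
Proof.
apply/fsetP => k; rewrite in_fsetI mem_build.
case: ifP => nt.
- rewrite /part seq_fsetE; apply/andP/idP.
  + case=> /hasP [d dt kd] kn.
    by have := I_disj K_gt2 (partl_I kd) kn => E; subst d.
  + move=> kn; split; last exact: partl_I kn.
    by apply/hasP; exists n.
- rewrite in_fset0; apply/negbTE/negP => /andP [/hasP [d dt kd] kn].
  have E := I_disj K_gt2 (partl_I kd) kn; subst d. by rewrite dt in nt.
Qed.

Lemma card_part t d : #|` part t d| = #|[set f : T d | ~~ holeF t f]|.
Proof.
rewrite /part size_seq_fset undup_id; first by rewrite size_map -cardE.
rewrite map_inj_uniq ?enum_uniq //; exact: enc_inj.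
Qed.

Lemma card_I d : #|` I K d| = NN K d.
Proof.
rewrite /I size_seq_fset undup_id; first by rewrite size_map -cardE.
rewrite map_inj_uniq ?enum_uniq //; exact: enc_inj.
Qed.

Lemma schreier_min t : schreier t -> forall e, e \in t -> #|`t| <= e.
Proof. by case=> a [ha [amin ->]]. Qed.

Lemma hole_lt t d : schreier t -> #|[set f : T d | holeF t f]| < NN K d.
Proof.
move=> st; have := hole_small K_gt2 d (schreier_min st).
have := NN_gt0 K_gt2 d. set H := #|_|. set N := NN K d.
have : 3 * H <= K * H by rewrite leq_mul2r K_gt2 orbT.
lia.
Qed.

Lemma card_part_eq t d : #|` part t d| = NN K d - #|[set f : T d | holeF t f]|.
Proof.
rewrite card_part /NN -(cardsC [set f : T d | holeF t f]) addKn.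
by apply: eq_card => f; rewrite !inE.
Qed.

Lemma part_nonempty t d : schreier t -> part t d != fset0.
Proof.
move=> st; apply/negP => /eqP E; have := card_part_eq t d; rewrite E cardfs0.
have := hole_lt d st; lia.
Qed.

Lemma hole_none t d (f : T d) : (forall e, e \in t -> d <= e) -> holeF t f = false.
Proof.
move=> h; apply/negbTE/hasPn => -[x y] /allpairsP [[x' y'] [/= xt yt [-> ->]]] /=.
have := h _ xt; apply: contraTN => /and3P [a b _]; lia.
Qed.

Lemma part_full t d : (forall e, e \in t -> d <= e) -> part t d = I K d.
Proof.
move=> h; apply/fsetP => k; rewrite /part /I !seq_fsetE; apply/idP/idP.
- by move/partl_I; rewrite (in_I K_gt2) (in_Il K_gt2).
- rewrite (in_Il K_gt2) => kb; have := kb; rewrite -(in_Il K_gt2) => /mapP [f _ ->].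
  by apply/mem_partl; exists f; rewrite hole_none.
Qed.

End Main.


Lemma exists_max (s : seq nat) : s != [::] -> exists2 m, m \in s & forall x, x \in s -> x <= m.
Proof.
elim: s => // a s IH _; case: (altP (s =P [::])) => [->|sn].
  by exists a; rewrite ?inE // => x; rewrite inE => /eqP->.
case: (IH sn) => m ms mmax; exists (maxn a m).
  by case: (leqP a m) => h; rewrite inE ?ms ?eqxx ?orbT // (maxn_idPr _) // ltnW.
by move=> x; rewrite inE => /orP[/eqP->|/mmax]; lia.
Qed.

Lemma seq_bound (s : seq nat) : exists B, forall d, d \in s -> d < B.
Proof.
elim: s => [|a s [B HB]]; first by exists 0.
by exists (maxn a.+1 B) => d; rewrite inE => /orP[/eqP->|/HB]; lia.
Qed.

Lemma fset_step (X : {fset nat}) : 0 < #|`X| ->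
  exists m, m \in X /\ (forall x, x \in (X `\ m)%fset -> x < m) /\ #|`(X `\ m)%fset| = #|`X|.-1.
Proof.
move=> h; have : enum_fset X != [::] by case: (enum_fset X) h.
case/exists_max => m mX mmax; exists m; split => //; split.
  by move=> x; rewrite in_fsetD1 => /andP [xm /mmax]; rewrite leq_eqVlt (negbTE xm).
by rewrite (cardfsD1 m X) mX.
Qed.

Lemma four (X : {fset nat}) : 4 <= #|`X| -> exists a b c d,
  [/\ a \in X, b \in X, c \in X & d \in X] /\ [/\ a < b, b < c & c < d].
Proof.
move=> h.
have [d [dX [dl dc]]] := fset_step (X := X) ltac:(lia).
have [c [cX [cl cc]]] := fset_step (X := (X `\ d)%fset) ltac:(lia).
have [b [bX [bl bc]]] := fset_step (X := ((X `\ d) `\ c)%fset) ltac:(lia).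
have [a [aX _]] := fset_step (X := (((X `\ d) `\ c) `\ b)%fset) ltac:(lia).
have ab := bl _ aX. have bc' := cl _ bX. have cd := dl _ cX.
move: aX bX cX; rewrite !in_fsetD1 => /and4P [_ _ _ aX] /and3P [_ _ bX] /andP [_ cX].
by exists a, b, c, d.
Qed.

Section P.
Variable K : nat.
Hypothesis K_gt2 : (2 < K)%N.
Notation T d := {ffun 'I_d -> 'I_(Q K d)}.

Lemma precomp (x : nat -> bool) :
  (forall n, exists t, schreier t /\ forall k, k < n -> (k \in build K t) = x k) ->
  exists N, forall k, x k -> k < N.
Proof.
move=> cl; apply: NNPP => nb.
have unb : forall N, exists k, N <= k /\ x k.
  move=> N; apply: NNPP => C; apply: nb; exists N => k xk; apply: NNPP => C2; apply: C.
  by exists k; split=> //; rewrite leqNgt; apply/negP.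
have [k0 [_ xk0]] := unb 0.
have [p kp] := cover K_gt2 k0.
have buildA : forall c, exists A : {fset nat}, p \in A /\ c <= #|`A| /\
    forall d, d \in A -> exists k, x k /\ k \in I K d.
  elim => [|c [A [pA [cA hA]]]].
    exists [fset p]%fset; split; first by rewrite in_fset1.
    by split => // d; rewrite in_fset1 => /eqP->; exists k0.
  have [B HB] := seq_bound (enum_fset A).
  have [k [kB xk]] := unb (Sb K B).
  have [d' kd'] := cover K_gt2 k.
  have d'B : B <= d'.
    move: kd'; rewrite (in_I K_gt2) => /andP [_ h]; case: (leqP B d') => // h2.
    have := S_mono K_gt2 h2; lia.
  have d'A : d' \notin A by apply/negP => /HB; lia.
  exists (d' |` A)%fset; split; first by rewrite in_fset1U pA orbT.
  split; first by rewrite cardfsU1 d'A; lia.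
  by move=> d; rewrite in_fset1U => /orP[/eqP->|/hA //]; exists k.
have [A [pA [cA hA]]] := buildA p.+1.
have [B HB] := seq_bound (enum_fset A).
have [t [st agree]] := cl (Sb K B).
have At : forall d, d \in A -> d \in t.
  move=> d dA; have [k [xk kd]] := hA d dA.
  have kB : k < Sb K B.
    move: kd; rewrite (in_I K_gt2) => /andP [_ h].
    have := S_mono K_gt2 (HB d dA); lia.
  have ks : k \in build K t by rewrite agree.
  case: (boolP (d \in t)) => // dt.
  have := inter_build K_gt2 t d; rewrite (negbTE dt) => /fsetP /(_ k).
  by rewrite in_fsetI ks kd in_fset0.
have sub : (A `<=` t)%fset by apply/fsubsetP => d; apply: At.
have := fsubset_leq_card sub; have := schreier_min st (At p pA); lia.
Qed.

Lemma not_large (M : subset_nat) : infinite_set M -> exists K0 : subset_nat,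
  subset_of K0 M /\ infinite_set K0 /\
  forall t, schreier t -> card_inter (build K t) K0 < 4.
Proof.
move=> iM.
pose D := fun d => exists f : T d, M (enc f).
have iD : inf D.
  move=> N; have [k [Nk Mk]] := iM (Sb K N).
  have [d kd] := cover K_gt2 k.
  have : k \in Il K d by rewrite -(seq_fsetE tt).
  case/mapP => f _ kf; exists d; split; last by exists f; rewrite -kf.
  move: kd; rewrite (in_I K_gt2) => /andP[_ h]; case: (leqP N d) => // h2.
  have := S_mono K_gt2 h2; lia.
pose f0 := fun d => [ffun _ : 'I_d => Ordinal (Q_gt0 K_gt2 d)] : T d.
pose fd := fun d => epsilon (inhabits (f0 d)) (fun f : T d => M (enc f)).
have fdM : forall d, D d -> M (enc (fd d)) by move=> d Dd; exact: (epsilon_spec _ _ Dd).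
pose c := fun j e d => fat (fd d) e %% rho K j.
have cb : forall j e d, c j e d < rho K j.
  by move=> j e d; apply: ltn_pmod; rewrite expn_gt0; case: K K_gt2.
have [J [iJ [JD Jp]]] := fusion iD cb.
pose P := fun k => exists d, J d /\ k = enc (fd d).
pose K0 := fun k => if excluded_middle_informative (P k) then true else false.
have K0P : forall k, K0 k <-> P k.
  by move=> k; rewrite /K0; case: excluded_middle_informative.
exists K0; split.
  by move=> k /K0P [d [Jd ->]]; exact: fdM (JD _ Jd).
split.
  move=> N; have [d [Nd Jd]] := iJ N; exists (enc (fd d)); split; last by apply/K0P; exists d.
  have := enc_bounds (fd d); have := S_ge K_gt2 d; lia.
move=> t st; rewrite /card_inter; apply: NNPP => C.
have C4 : 4 <= #|`[fset k in build K t | K0 k]%fset| by rewrite leqNgt; apply/negP.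
have [a [b [c' [d [[aX bX cX dX] [ab bc cd]]]]]] := four C4.
have hit : forall k, k \in [fset k in build K t | K0 k]%fset ->
    exists e, J e /\ e \in t /\ ~~ holeF t (fd e) /\ k = enc (fd e).
  move=> k; rewrite !inE => /andP [kb /K0P [e [Je ke]]].
  exists e; split => //; rewrite ke in kb.
  move: kb; rewrite mem_build => /hasP [e' e't /mem_partl [f [hf E]]].
  have ee := enc_piece K_gt2 E; subst e'.
  have ff := enc_inj E; subst f.
  by split.
have ord : forall e e', enc (fd e) < enc (fd e') -> e < e'.
  move=> e e' lt; have le := enc_lt K_gt2 lt; rewrite leq_eqVlt in le.
  case/orP: le => // /eqP E; subst; lia.
have [e1 [J1 [t1 [h1 E1]]]] := hit _ aX.
have [e2 [J2 [t2 [h2 E2]]]] := hit _ bX.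
have [e3 [J3 [t3 [h3 E3]]]] := hit _ cX.
have [e4 [J4 [t4 [h4 E4]]]] := hit _ dX.
subst a b c' d.
have o12 := ord _ _ ab. have o23 := ord _ _ bc. have o34 := ord _ _ cd.
have := Jp e1 e2 e3 e4 J1 J2 J3 J4 o12 o23 o34; rewrite /c => E.
have dv : rho K #|`t| %| rho K e1.
  rewrite /rho dvdn_exp2l // ltnS.
  exact: leq_add (schreier_min st t1) (schreier_min st t1).
apply: (negP h4); apply/hasP; exists (e2, e3); first exact: allpairs_f.
apply/and3P; split => //; apply/eqP.
by rewrite -(modn_dvdm (fat (fd e4) e2) dv) E (modn_dvdm _ dv).
Qed.
End P.

Import Order.TTheory GRing.Theory Num.Theory.
Lemma real_step (R : realType) (eps : R) (K N H : nat) :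
  (0 < eps)%R -> (1 <= eps * K%:R)%R -> (K * H <= N)%N ->
  ((1 - eps) * N%:R <= ((N - H)%N)%:R)%R.
Proof.
move=> e0 eK hK.
have HN : (H <= N)%N.
  case: K eK hK => [|K'] eK hK; first by move: eK; rewrite mulr0 ler10.
  by apply: leq_trans hK; rewrite leq_pmull.
rewrite natrB //.
have h1 : (K%:R * H%:R <= N%:R :> R)%R by rewrite -natrM ler_nat.
have h2 : (H%:R <= eps * N%:R :> R)%R.
  apply: le_trans (_ : eps * (K%:R * H%:R) <= _)%R; last by rewrite ler_wpM2l // ltW.
  rewrite mulrA -[X in (X <= _)%R]mul1r ler_wpM2r //.
lra.
Qed.

Unset Implicit Arguments.
Local Open Scope fset_scope.

Theorem theorem4p6 (R : realType) (eps : R) :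
  (0 < eps)%R -> (eps < 1)%R ->
  exists (I : nat -> {fset nat}) (F : nfamily),
    partition_nat I /\
    precompact F /\
    (* (a) *)
    (forall M : subset_nat, infinite_set M -> ~ n_large F M 4) /\
    (* (b) *)
    same_family (G_lambda I (1 - eps)%R F) schreier /\
    same_family (G_plus I F) schreier /\
    (* (c) *)
    (forall s, F s -> forall n, s `&` I n != fset0 ->
        (forall m, (m < n)%N -> s `&` I m = fset0) ->
        s `&` I n = I n).
Proof.
move=> e0 e1.
have [K [K2 eK]] : exists K : nat, (2 < K)%N /\ (1 <= eps * K%:R)%R.
  have ei : (0 <= eps^-1)%R by rewrite invr_ge0 ltW.
  have hb := archi_boundP ei.
  exists (maxn 3 (Num.bound eps^-1)); split; first by rewrite leq_max.
  have hK : ((Num.bound eps^-1)%:R <= (maxn 3 (Num.bound eps^-1))%:R :> R)%R.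
    by rewrite ler_nat leq_max leqnn orbT.
  rewrite -[X in (X <= _)%R](mulfV (lt0r_neq0 e0)) ler_pM2l //.
  exact: le_trans (ltW hb) hK.
pose Fm : nfamily := fun s => exists t, schreier t /\ s = build K t.
have key : forall t n, schreier t ->
   ((n \in t) <-> ((1 - eps) * (#|` I K n|)%:R <= (#|` build K t `&` I K n|)%:R)%R) /\
   ((n \in t) <-> (build K t `&` I K n != fset0)).
  move=> t n st; rewrite (inter_build K2 t n) card_I; have Ng := NN_gt0 K2 n.
  case nt: (n \in t).
  - split; split => // _; last exact: part_nonempty.
    rewrite card_part_eq. have rs := (@real_step R eps K (NN K n) #|[set f : {ffun 'I_n -> 'I_(Q K n)} | holeF t f]| e0 eK).
    apply: rs. exact: (hole_small K2 n (schreier_min st)).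
  - have c0 : #|` (@fset0 nat)| = 0%N by apply: cardfs0.
    rewrite c0 eqxx; split; split => //.
    have : (0 < (1 - eps) * (NN K n)%:R)%R.
      by rewrite mulr_gt0 ?subr_gt0 // ltr0n.
    move=> h1 h2; have := lt_le_trans h1 h2; by rewrite ltxx.
exists (I K), Fm.
split.
  split; first by move=> n; apply/negP => /eqP E; have := card_I K n; rewrite E cardfs0; have := NN_gt0 K2 n; lia.
  split; last exact: cover K2.
  move=> n m nm; apply/fsetP => k; rewrite in_fsetI in_fset0; apply/negbTE/negP => /andP [a b].
  exact: nm (I_disj K2 a b).
split.
  move=> x hx; apply: (precomp K2) => n; have [s [[t [st ->]] h]] := hx n.
  by exists t.
split.
  move=> M iM nl; have [K0 [sub [iK0 small]]] := not_large K2 iM.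
  have [s [[t [st ->]] h]] := nl K0 sub iK0.
  have := small t st; lia.
split.
  move=> t; split.
  - case=> s [[t' [st' ->]] hs].
    have -> : t = t'; last by [].
    apply/fsetP => n; apply/idP/idP => h.
    + by apply/(key t' n st').1/(hs n).1.
    + by apply/(hs n).2/(key t' n st').1.
  - move=> st; exists (build K t); split; first by exists t.
    by move=> n; exact: (key t n st).1.
split.
  move=> t; split.
  - case=> s [[t' [st' ->]] hs].
    have -> : t = t'; last by [].
    apply/fsetP => n; apply/idP/idP => h.
    + by apply/(key t' n st').2/(hs n).1.
    + by apply/(hs n).2/(key t' n st').2.
  - move=> st; exists (build K t); split; first by exists t.
    by move=> n; exact: (key t n st).2.
move=> s [t [st ->]] n ne hm.
have nt : n \in t by apply/(key t n st).2.
rewrite (inter_build K2 t n) nt; apply: (part_full K2) => e et.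
case: (leqP n e) => // en.
have := (key t e st).2; rewrite hm // eqxx => -[h _].
by have := h et.
Qed.
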